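(* Let $Q$ be a quiver and $i$ a mutable vertex such that $\mu_i(Q)$ is a fork (resp. an ice fork) with point of return $i$. Then $i$ is cycle-preserving for $Q$.
   Context: A quiver is a finite directed multigraph with no loops and no oriented 2-cycles, whose vertex set is partitioned into mutable and frozen vertices; arrows between two frozen vertices are ignored. $b_{ik}$ = number of arrows $i\to k$ minus number of arrows $k\to i$; $Q|_S$ is the induced subquiver on $S$; $[n]$ denotes the set of mutable vertices. Mutation $\mu_j$ at mutable $j$: for each path $i\to j\to k$ add $b_{ij}b_{jk}$ arrows $i\to k$, reverse all arrows at $j$, cancel 2-cycles. A 3-vertex quiver (or induced subquiver) is an oriented 3-cycle if it has at most one frozen vertex and its underlying directed graph is not acyclic. A mutable vertex $j$ is cycle-preserving for $Q$ if whenever $Q|_{\{i,j,k\}}$ is an oriented 3-cycle containing $j$, $\mu_j(Q)|_{\{i,j,k\}}$ is also an oriented 3-cycle. Abundant: at least 2 arrows between every pair of vertices at least one of which is mutable. $F^+(r)=\{i: r\to i\}$, $F^-(r)=\{j:j\to r\}$. A fork is an abundant non-acyclic quiver with at most one frozen vertex and a vertex $r$ (point of return) such that $b_{ij}>b_{ri}$ and $b_{ij}>b_{jr}$ for all $i\in F^+(r),j\in F^-(r)$, and the subquivers induced on $F^+(r)$ and $F^-(r)$ are acyclic. An ice fork with point of return $r$ is a quiver with mutable vertices $[n]$ and frozen vertices $u_1,\dots,u_m$ ($m\ge1$) such that each $Q|_{[n]\cup\{u_i\}}$ is a fork with point of return $r$. *)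

(* Defs.v *)
From mathcomp Require Import all_boot all_order all_algebra.
Set Implicit Arguments. Unset Strict Implicit. Unset Printing Implicit Defensive.
Import Order.TTheory GRing.Theory Num.Theory.
Local Open Scope ring_scope.

(* A quiver on a finite vertex type V is given by its set of mutable vertices
   [mut] (the other vertices are frozen) and its skew-symmetric exchange matrix
   [b], b x y = #arrows x->y - #arrows y->x.  Since there are no oriented
   2-cycles, the number of arrows x -> y is the positive part of b x y.
   Arrows between two frozen vertices are ignored (see [arrow]). *)
Definition skew_symmetric (V : finType) (b : V -> V -> int) := forall x y, b x y = - b y x.

Definition posp (z : int) : int := if 0 < z then z else 0.

Definition arrow (V : finType) (mut : {set V}) (b : V -> V -> int) (x y : V) : bool :=
  ((x \in mut) || (y \in mut)) && (0 < b x y).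

(* mutation at j: for each path x -> j -> y add arrows x -> y, reverse the
   arrows at j, cancel 2-cycles. *)
Definition mutate (V : finType) (j : V) (b : V -> V -> int) : V -> V -> int :=
  fun x y => if (x == j) || (y == j) then - b x y
             else b x y + posp (b x j) * posp (b j y) - posp (b y j) * posp (b j x).

Definition acyclic_on (V : finType) (mut : {set V}) (b : V -> V -> int) (S : {set V}) :=
  forall c : seq V, c != [::] -> all (fun x => x \in S) c -> ~~ cycle (arrow mut b) c.

Definition oriented3cycle (V : finType) (mut : {set V}) (b : V -> V -> int) (i j k : V) :=
  [/\ uniq [:: i; j; k],
      (#|[set i; j; k] :\: mut| <= 1)%N &
      ~ acyclic_on mut b [set i; j; k]].

Definition cycle_preserving (V : finType) (mut : {set V}) (b : V -> V -> int) (j : V) :=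
  j \in mut /\
  forall i k : V, oriented3cycle mut b i j k -> oriented3cycle mut (mutate j b) i j k.

Definition abundant_on (V : finType) (mut : {set V}) (b : V -> V -> int) (S : {set V}) :=
  forall x y, x \in S -> y \in S -> x != y -> (x \in mut) || (y \in mut) ->
    2 <= `|b x y|.

Definition Fplus (V : finType) (mut : {set V}) (b : V -> V -> int) (S : {set V}) (r : V) :=
  [set x in S | arrow mut b r x].
Definition Fminus (V : finType) (mut : {set V}) (b : V -> V -> int) (S : {set V}) (r : V) :=
  [set x in S | arrow mut b x r].

Definition fork_on (V : finType) (mut : {set V}) (b : V -> V -> int) (S : {set V}) (r : V) :=
  [/\ abundant_on mut b S,
      ~ acyclic_on mut b S,
      (#|S :\: mut| <= 1)%N &
      r \in S] /\
  [/\
      (forall x y, x \in Fplus mut b S r -> y \in Fminus mut b S r ->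
          b r x < b x y /\ b y r < b x y),
      acyclic_on mut b (Fplus mut b S r) &
      acyclic_on mut b (Fminus mut b S r)].

Definition is_fork (V : finType) (mut : {set V}) (b : V -> V -> int) (r : V) :=
  fork_on mut b [set: V] r.

Definition is_ice_fork (V : finType) (mut : {set V}) (b : V -> V -> int) (r : V) :=
  (exists u : V, u \notin mut) /\
  forall u : V, u \notin mut -> fork_on mut b (u |: mut) r.

(* Main.v *)
Require Import Defs.
From mathcomp Require Import all_boot all_order all_algebra.
From mathcomp Require Import zify.
Set Implicit Arguments. Unset Strict Implicit. Unset Printing Implicit Defensive.
Import Order.TTheory GRing.Theory Num.Theory.

Section Acyc.
Variables (T : finType) (e : rel T) (p q r : T).
Hypothesis irr : forall u, ~~ e u u.
Hypothesis anti : forall u v, e u v -> ~~ e v u.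
Hypothesis nc1 : ~~ (e p q && e q r && e r p).
Hypothesis nc2 : ~~ (e p r && e r q && e q p).

Let pr u := [|| e p u, e q u | e r u].
Let d u : nat := if [|| e p u && pr p, e q u && pr q | e r u && pr r] then 2
  else if pr u then 1 else 0.

Let anti' u v : ~~ (e u v && e v u).
Proof. by case H: (e u v) => //=; apply: anti. Qed.

Let mem3 u : u \in [set p; q; r] -> [\/ u = p, u = q | u = r].
Proof. by rewrite !inE => /orP [/orP [] | ] /eqP ->; [apply: Or31|apply: Or32|apply: Or33]. Qed.

Let key u v : u \in [set p; q; r] -> v \in [set p; q; r] -> e u v -> (d u < d v)%N.
Proof.
rewrite /d /pr.
have Hpp := negbTE (irr p); have Hqq := negbTE (irr q); have Hrr := negbTE (irr r).
have A1 := anti' p q; have A2 := anti' q r; have A3 := anti' p r.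
move: nc1 nc2 A1 A2 A3.
move=> + + + + + /mem3 [] -> /mem3 [] ->;
rewrite ?Hpp ?Hqq ?Hrr //;
case: (e p q); case: (e q p); case: (e q r); case: (e r q); case: (e p r); case: (e r p) => //.
Qed.

Let pathlt s a : a \in [set p; q; r] -> all (fun x => x \in [set p; q; r]) s ->
  path e a s -> s != [::] -> (d a < d (last a s))%N.
Proof.
elim: s a => [//|y s IH] a Ha /= /andP [Hy Hs] /andP [Hay Hp] _.
have := key Ha Hy Hay.
case: s IH Hs Hp => [//|z s] IH Hs Hp Hlt.
by apply: ltn_trans Hlt (IH _ Hy Hs Hp isT).
Qed.

Lemma acyc3 (c : seq T) : c != [::] -> all (fun x => x \in [set p; q; r]) c -> ~~ cycle e c.
Proof.
case: c => [//|a c] _ /= /andP [Ha Hc].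
apply/negP => Hcyc.
have Hall : all (fun x => x \in [set p; q; r]) (rcons c a) by rewrite all_rcons Ha Hc.
have Hne : rcons c a != [::] by case: c {Hc Hcyc Hall}.
by have := pathlt Ha Hall Hcyc Hne; rewrite last_rcons ltnn.
Qed.
End Acyc.

Local Open Scope ring_scope.

Theorem mainTheorem3 (V : finType) (mut : {set V}) (b : V -> V -> int) (i : V) :
  skew_symmetric b -> i \in mut ->
  (is_fork mut (mutate i b) i \/ is_ice_fork mut (mutate i b) i) ->
  cycle_preserving mut b i.
Proof.
move=> sk imut Hf; split => // a c [Hu Hcard Hnac].
have irr : forall u, ~~ arrow mut b u u.
  move=> u; rewrite /arrow; have := sk u u.
  move=> h; have -> : b u u = 0 by move: h; lia.
  by rewrite ltxx andbF.
have anti : forall u v, arrow mut b u v -> ~~ arrow mut b v u.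
  move=> u v /andP [_ H]; rewrite /arrow sk oppr_gt0 negb_and; apply/orP; right.
  by rewrite -leNgt ltW.
have Hcyc : (arrow mut b a i && arrow mut b i c && arrow mut b c a) ||
            (arrow mut b a c && arrow mut b c i && arrow mut b i a).
  case: (boolP (_ || _)) => // /norP [n1 n2]; exfalso; apply: Hnac.
  by move=> s; apply: (acyc3 irr anti n1 n2).
move: (Hu); rewrite /= !inE !negb_or => /andP [/andP [ai ac] /andP [ic _]].
have bi x y : x != i -> y != i -> mutate i b x y = b x y + posp (b x i) * posp (b i y) - posp (b y i) * posp (b i x).
  by move=> hx hy; rewrite /mutate (negbTE hx) (negbTE hy).
have bii x : mutate i b i x = - b i x by rewrite /mutate eqxx.
have bxi x : mutate i b x i = - b x i by rewrite /mutate eqxx orbT.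
have getS : forall S : {set V}, a \in S -> c \in S -> i \in S -> fork_on mut (mutate i b) S i ->
   ~ acyclic_on mut (mutate i b) [set a; i; c].
  move=> S aS cS iS [_ [Hfk _ _]] Hac.
  case/orP: Hcyc.
  - move=> /andP [/andP [/andP [_ H1] /andP [_ H2]] /andP [Hm _]].
    have hp : a \in Fplus mut (mutate i b) S i by rewrite inE aS /arrow imut bii -sk H1.
    have hm : c \in Fminus mut (mutate i b) S i by rewrite inE cS /arrow imut orbT bxi -sk H2.
    have [h1 _] := Hfk _ _ hp hm.
    have hac : 0 < mutate i b a c by apply: lt_trans h1; rewrite bii -sk.
    have Hall : all (fun x => x \in [set a; i; c]) [:: i; a; c] by rewrite /= !inE !eqxx ?orbT.
    by have := Hac _ (isT : [:: i; _; _] != [::]) Hall; rewrite /= /arrow imut bii -sk H1 bxi -sk H2 hac orbT (orbC (a \in mut)) Hm.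
  - move=> /andP [/andP [/andP [Hm _] /andP [_ H1]] /andP [_ H2]].
    have hp : c \in Fplus mut (mutate i b) S i by rewrite inE cS /arrow imut bii -sk H1.
    have hm : a \in Fminus mut (mutate i b) S i by rewrite inE aS /arrow imut orbT bxi -sk H2.
    have [h1 _] := Hfk _ _ hp hm.
    have hca : 0 < mutate i b c a by apply: lt_trans h1; rewrite bii -sk.
    have Hall : all (fun x => x \in [set a; i; c]) [:: i; c; a] by rewrite /= !inE !eqxx ?orbT.
    by have := Hac _ (isT : [:: i; _; _] != [::]) Hall; rewrite /= /arrow imut bii -sk H1 bxi -sk H2 hca orbT (orbC (c \in mut)) Hm.
split => //.
have Hm : (a \in mut) || (c \in mut).
  case/orP: Hcyc; first by move=> /andP [_ /andP [H _]]; move: H; rewrite orbC.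
  by move=> /andP [/andP [/andP [H _] _] _].
case: Hf => [Hf|[[u0 Hu0] Hf]].
  by apply: (getS setT); rewrite ?inE.
case: (boolP (a \in mut)) => am; case: (boolP (c \in mut)) => cm.
- by apply: (getS _ _ _ _ (Hf u0 Hu0)); rewrite !inE ?am ?cm ?imut ?orbT.
- by apply: (getS _ _ _ _ (Hf c cm)); rewrite !inE ?am ?cm ?imut ?eqxx ?orbT.
- by apply: (getS _ _ _ _ (Hf a am)); rewrite !inE ?am ?cm ?imut ?eqxx ?orbT.
- by move: Hm; rewrite (negbTE am) (negbTE cm).
Qed.
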